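(* Let $f_j$, $j\in J=\{1,\dots,m\}$, be functions on $\mathbb{R}^n$, each strongly convex with constant $\mu_j>0$; let $D=\{x: f_j(x)\le 0,\ j\in J\}$ satisfy the Slater condition; let $f$ be a convex function attaining its minimum on $D$, such that no point of absolute minimum of $f$ on $\mathbb{R}^n$ (if one exists) lies in $\operatorname{int}D$. Let $x^*$ be the (unique) solution of $\min\{f(x):x\in D\}$, $f^*=f(x^* )$, $E^*=\{x\in\mathbb{R}^n: f(x)\le f^*\}$, $F(x)=\max_{j\in J}f_j(x)$, $\mu=\min_j\mu_j$, $D_\varepsilon=\{x:F(x)\le\varepsilon\}$. Let $\varepsilon>0$. Then every point $y\in D_\varepsilon\cap E^*$ with $y\ne x^*$ satisfies $\|y-x^*\|\le\sqrt{\varepsilon/\mu}$; if moreover $f$ satisfies a Lipschitz condition with constant $L$, then also $|f(y)-f^*|\le L\sqrt{\varepsilon/\mu}$.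
   Context: Each set $D_j=\{x:f_j(x)\le0\}$ is assumed to have nonempty interior. *)

(* Defs.v *)
From HB Require Import structures.
From mathcomp Require Import all_boot all_order all_algebra.
From mathcomp Require Import all_classical all_reals all_analysis.
Set Implicit Arguments. Unset Strict Implicit. Unset Printing Implicit Defensive.
Import Order.TTheory GRing.Theory Num.Theory.
Import numFieldNormedType.Exports.
Local Open Scope ring_scope.
Local Open Scope classical_set_scope.

Definition enorm (R : realType) (n : nat) (x : 'rV[R]_n) : R :=
  Num.sqrt (\sum_(i < n) x ord0 i ^+ 2).

Definition convex_fun (R : realType) (n : nat) (f : 'rV[R]_n -> R) : Prop :=
  forall (x y : 'rV[R]_n) (l : R), 0 <= l -> l <= 1 ->
    f (l *: x + (1 - l) *: y) <= l * f x + (1 - l) * f y.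

(* strong convexity with constant mu (Polyak/Vasil'ev convention) *)
Definition strongly_convex (R : realType) (n : nat) (mu : R)
  (f : 'rV[R]_n -> R) : Prop :=
  forall (x y : 'rV[R]_n) (l : R), 0 <= l -> l <= 1 ->
    f (l *: x + (1 - l) *: y)
      <= l * f x + (1 - l) * f y - mu * l * (1 - l) * enorm (x - y) ^+ 2.

Definition lipschitz_fun (R : realType) (n : nat) (L : R)
  (f : 'rV[R]_n -> R) : Prop :=
  forall x y : 'rV[R]_n, `|f x - f y| <= L * enorm (x - y).

Definition feas (R : realType) (n m : nat) (fs : 'I_m -> 'rV[R]_n -> R)
  : set 'rV[R]_n := [set x | forall j, fs j x <= 0].

Definition slater (R : realType) (n m : nat) (fs : 'I_m -> 'rV[R]_n -> R)
  : Prop := exists x : 'rV[R]_n, forall j, fs j x < 0.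

Definition Fmax (R : realType) (n m : nat) (fs : 'I_m.+1 -> 'rV[R]_n -> R)
  (x : 'rV[R]_n) : R := \big[Num.max/fs ord0 x]_(j < m.+1) fs j x.

Definition mumin (R : realType) (m : nat) (mus : 'I_m.+1 -> R) : R :=
  \big[Num.min/mus ord0]_(j < m.+1) mus j.

(* Main.v *)
Set Warnings "-all".
Require Import Defs.
From HB Require Import structures.
From mathcomp Require Import all_boot all_order all_algebra.
From mathcomp Require Import all_classical all_reals all_analysis.
From mathcomp Require Import ring lra.
Import Order.TTheory GRing.Theory Num.Theory.
Import numFieldNormedType.Exports.
Local Open Scope ring_scope.
Local Open Scope classical_set_scope.
Set Implicit Arguments. Unset Strict Implicit.
Lemma big_max_ge (R : realType) (I : eqType) (r : seq I) (F : I -> R) x0 j :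
  j \in r -> F j <= \big[Num.max/x0]_(i <- r) F i.
Proof.
elim: r => [//|a r IH]; rewrite inE big_cons => /orP[/eqP->|/IH h].
  by rewrite le_max lexx.
by rewrite le_max h orbT.
Qed.
Lemma big_min_le (R : realType) (I : eqType) (r : seq I) (F : I -> R) x0 j :
  j \in r -> \big[Num.min/x0]_(i <- r) F i <= F j.
Proof.
elim: r => [//|a r IH]; rewrite inE big_cons => /orP[/eqP->|/IH h].
  by rewrite ge_min lexx.
by rewrite ge_min h orbT.
Qed.
Lemma coord_le (R : realType) n (h : 'rV[R]_n) i : `|h ord0 i| <= `|h|.
Proof.
have -> : `|h| = mx_norm h by [].
rewrite mx_normrE.
exact: (@big_max_ge R _ _ (fun ij : prod _ _ => `|h ij.1 ij.2|) 0 _ (mem_index_enum (ord0, i))).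
Qed.
Lemma enorm_ge0 (R : realType) n (x : 'rV[R]_n) : 0 <= enorm x.
Proof. exact: sqrtr_ge0. Qed.
Lemma enorm_gt0 (R : realType) n (x : 'rV[R]_n) : x != 0 -> 0 < enorm x.
Proof.
move=> x0; rewrite /enorm sqrtr_gt0 lt_def sumr_ge0 ?andbT; last by move=> i _; rewrite sqr_ge0.
apply: contra x0 => /eqP/psumr_eq0P H; apply/eqP/rowP => i.
rewrite mxE; apply/eqP; rewrite -sqrf_eq0; apply/eqP.
have -> : (0 : 'I_1) = ord0 by apply/val_inj.
apply: H => // j _; exact: sqr_ge0.
Qed.

Lemma jensen (R : realType) n (g : 'rV[R]_n -> R) : convex_fun g ->
  forall k (v : 'I_k.+1 -> 'rV[R]_n),
  g ((k.+1)%:R^-1 *: \sum_i v i) <= (k.+1)%:R^-1 * \sum_i g (v i).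
Proof.
move=> cg; elim=> [|k IH] v.
  by rewrite !big_ord1 invr1 scale1r mul1r.
rewrite big_ord_recr [X in _ <= _ * X]big_ord_recr /=.
set S := \sum_(i < k.+1) v (widen_ord _ i).
set T := \sum_(i < k.+1) g (v (widen_ord _ i)).
have k1 : 0 < (k.+1)%:R :> R by rewrite ltr0n.
have k2 : 0 < (k.+2)%:R :> R by rewrite ltr0n.
set l := (k.+2)%:R^-1 : R.
have -> : l *: (S + v ord_max) = l *: v ord_max + (1 - l) *: ((k.+1)%:R^-1 *: S).
  rewrite scalerA scalerDr addrC; congr (_ + _); congr (_ *: _).
  rewrite /l -[(k.+2)%:R]/((k.+1).+1)%:R mulrSr; field.
  by apply/andP; split; rewrite ?gt_eqF // -mulrSr.
apply: le_trans (cg _ _ l _ _) _.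
- by rewrite /l invr_ge0 ltW.
- by rewrite /l invf_le1 // ler1n.
have := IH (fun i => v (widen_ord (leqnSn _) i)) => /= IHk.
rewrite -/S -/T in IHk.
have l1 : 0 <= 1 - l by rewrite subr_ge0 /l invf_le1 // ler1n.
apply: le_trans (lerD (lexx _) (ler_wpM2l l1 IHk)) _.
rewrite le_eqVlt; apply/orP; left; apply/eqP.
rewrite /l -[(k.+2)%:R]/((k.+1).+1)%:R mulrSr; field.
by apply/andP; split; rewrite ?gt_eqF // -mulrSr.
Qed.
Lemma seg_id (R : realType) n (z d : 'rV[R]_n) t :
  t *: (z + d) + (1 - t) *: z = z + t *: d.
Proof. by rewrite scalerDr scalerBl scale1r addrC addrA subrK addrC. Qed.

Lemma convex_seg (R : realType) n (g : 'rV[R]_n -> R) z d t :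
  convex_fun g -> 0 <= t -> t <= 1 -> g (z + t *: d) <= g z + t * (g (z + d) - g z).
Proof.
move=> cg t0 t1; rewrite -seg_id; apply: le_trans (cg _ _ _ t0 t1) _.
rewrite le_eqVlt; apply/orP; left; apply/eqP; ring.
Qed.

Lemma term_le_sum (R : realType) k (F : 'I_k -> R) i :
  (forall j, 0 <= F j) -> F i <= \sum_j F j.
Proof.
move=> F0; rewrite (bigD1 i) //= lerDl; apply: sumr_ge0 => j _; exact: F0.
Qed.

Lemma convex_near_neg (R : realType) n (g : 'rV[R]_n -> R) z :
  convex_fun g -> g z < 0 -> \forall w \near z, g w < 0.
Proof.
case: n g z => [|k] g z cg gz.
  near=> w; suff -> : w = z by [].
  by apply/rowP => -[].
set N := (k.+1)%:R : R.
have N0 : 0 < N by rewrite ltr0n.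
set e := fun i : 'I_k.+1 => (delta_mx 0 i : 'rV[R]_k.+1).
set K := \sum_i (`|g (z + e i) - g z| + `|g (z + - e i) - g z|).
have K0 : 0 <= K by apply: sumr_ge0 => i _; rewrite addr_ge0.
set r := Num.min (N^-1) (- g z / (N * (K + 1))).
have r0 : 0 < r.
  rewrite lt_min invr_gt0 N0 /= divr_gt0 // ?oppr_gt0 // mulr_gt0 //.
  by rewrite ltr_pwDr.
apply/nbhs_normP; exists r => //= w.
rewrite /ball_ /= => zw.
set h := w - z.
have hr : `|h| < r by rewrite /h -normrN opprB.
have hi i : `|h 0 i| <= `|h| by exact: coord_le.
set v := fun i => z + (N * h 0 i) *: e i.
have wv : w = N^-1 *: \sum_i v i.
  rewrite big_split /= sumr_const card_ord -scaler_nat.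
  rewrite (eq_bigr (fun i => N *: (h 0 i *: e i))); last first.
    by move=> i _; rewrite scalerA.
  rewrite -scaler_sumr -row_sum_delta scalerDr !scalerA mulVf ?gt_eqF //.
  by rewrite !scale1r /h addrC subrK.
have vi i : g (v i) <= g z + N * `|h 0 i| * K.
  have t0 : 0 <= N * `|h 0 i| by rewrite mulr_ge0 // ltW.
  have t1 : N * `|h 0 i| <= 1.
    rewrite -(mulfV (lt0r_neq0 N0)) ler_pM2l //.
    apply: le_trans (hi i) _; apply: ltW; apply: lt_le_trans hr _.
    by rewrite ge_min lexx.
  rewrite /v; have [hpos|hneg] := leP 0 (h 0 i).
    have -> : N * h 0 i = N * `|h 0 i| by rewrite ger0_norm.
    apply: le_trans (convex_seg z (e i) cg t0 t1) _.
    rewrite lerD2l; apply: ler_wpM2l => //; rewrite /K; apply: le_trans _ (@term_le_sum _ _ _ i _).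
      by rewrite (le_trans (ler_norm _)) // lerDl.
    by move=> j; rewrite addr_ge0.
  have -> : N * h 0 i = N * `|h 0 i| * (-1) by rewrite ltr0_norm // mulrN1 mulrN opprK.
  rewrite -scalerA scaleN1r.
  apply: le_trans (convex_seg z (- e i) cg t0 t1) _.
  rewrite lerD2l; apply: ler_wpM2l => //; rewrite /K; apply: le_trans _ (@term_le_sum _ _ _ i _).
    by rewrite (le_trans (ler_norm _)) // lerDr.
  by move=> j; rewrite addr_ge0.
rewrite wv; apply: le_lt_trans (jensen cg v) _.
have Ni : 0 <= N^-1 by rewrite invr_ge0 ltW.
have Sv : \sum_i g (v i) <= \sum_i (g z + N * `|h 0 i| * K) by apply: ler_sum => i _; exact: vi.
apply: le_lt_trans (ler_wpM2l Ni Sv) _.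
rewrite big_split /= sumr_const card_ord mulrDr -mulr_natl.
rewrite -/N mulrA mulVf ?gt_eqF // mul1r.
rewrite -mulr_suml -mulr_sumr mulrA mulrA mulVf ?gt_eqF // mul1r.
have sh : \sum_i `|h 0 i| <= N * `|h|.
  apply: le_trans (ler_sum _ (fun i _ => hi i)) _.
  by rewrite sumr_const card_ord -mulr_natl.
have : (\sum_i `|h 0 i|) * K <= N * r * K.
  apply: ler_wpM2r => //; apply: le_trans sh _; apply: ler_wpM2l; [exact: ltW N0 | exact: ltW].
have : N * r * K <= N * (- g z / (N * (K + 1))) * K.
  apply: ler_wpM2r => //; apply: ler_wpM2l; [exact: ltW | by rewrite ge_min lexx orbT].
have -> : N * (- g z / (N * (K + 1))) * K = - g z * (K / (K + 1)).
  by field; do ?[apply/andP; split]; rewrite ?lt0r_neq0 // ?ltr_pwDr.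
have : - g z * (K / (K + 1)) < - g z.
  rewrite gtr_pMr ?oppr_gt0 // ltr_pdivrMr ?ltr_pwDr // mul1r.
  by rewrite ltrDl.
lra.
Unshelve. all: end_near.
Qed.
Lemma sconv_conv (R : realType) n (mu : R) (g : 'rV[R]_n -> R) :
  0 <= mu -> strongly_convex mu g -> convex_fun g.
Proof.
move=> mu0 sg x y l l0 l1; apply: le_trans (sg x y l l0 l1) _.
rewrite lerBlDr lerDl; apply: mulr_ge0; last exact: sqr_ge0.
by rewrite mulr_ge0 ?subr_ge0 // mulr_ge0.
Qed.

Unset Implicit Arguments. Set Strict Implicit.

Theorem lemma1p1p8 (R : realType) (n m : nat)
  (fs : 'I_m.+1 -> 'rV[R]_n -> R) (mus : 'I_m.+1 -> R)
  (f : 'rV[R]_n -> R) (xstar : 'rV[R]_n) (eps : R) :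
  (forall j, 0 < mus j) ->
  (forall j, strongly_convex (mus j) (fs j)) ->
  slater fs ->
  convex_fun f ->
  (* no point of absolute minimum of f on R^n lies in int D *)
  (forall x : 'rV[R]_n, (forall z, f x <= f z) -> ~ interior (feas fs) x) ->
  (* x* is a (the) minimizer of f on D *)
  feas fs xstar ->
  (forall x, feas fs x -> f xstar <= f x) ->
  0 < eps ->
  forall y : 'rV[R]_n,
    Fmax fs y <= eps -> f y <= f xstar -> y <> xstar ->
    enorm (y - xstar) <= Num.sqrt (eps / mumin mus) /\
    (forall L : R, lipschitz_fun L f ->
       `|f y - f xstar| <= L * Num.sqrt (eps / mumin mus)).
Proof.
move=> mupos sc _ cf nomin fx xmin epos y Fy fy yx.
set mu := mumin mus.
have mu0 : 0 < mu.
  rewrite /mu /mumin; elim/big_ind: _ => [|a b ha hb|j _]; [exact: mupos|by rewrite lt_min ha hb|exact: mupos].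
have mule j : mu <= mus j.
  exact: (@big_min_le R _ _ mus _ _ (mem_index_enum j)).
have Fge j : fs j y <= eps.
  apply: le_trans Fy; exact: (@big_max_ge R _ _ (fun j => fs j y) _ _ (mem_index_enum j)).
set d := enorm (y - xstar).
have d0 : 0 < d by apply: enorm_gt0; rewrite subr_eq0; apply/eqP.
have key : mu * d ^+ 2 <= eps.
  rewrite leNgt; apply/negP => H.
  have D0 : 0 < mu * d ^+ 2 by rewrite mulr_gt0 // exprn_gt0.
  set q := eps / (mu * d ^+ 2).
  have q0 : 0 < q by rewrite divr_gt0.
  have q1 : q < 1 by rewrite ltr_pdivrMr // mul1r.
  have qe : q * (mu * d ^+ 2) = eps by rewrite /q mulfVK // lt0r_neq0.
  set l := (1 - q) / 2.
  have l0 : 0 < l by rewrite divr_gt0 // subr_gt0.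
  have l1 : l < 1 by rewrite /l ltr_pdivrMr //; lra.
  have lq : q < 1 - l by rewrite /l; lra.
  set z := l *: y + (1 - l) *: xstar.
  have fz j : fs j z < 0.
    apply: le_lt_trans (sc j y xstar l (ltW l0) (ltW l1)) _.
    rewrite -/d.
    have h1 : l * fs j y <= l * eps by rewrite ler_pM2l.
    have h2 : (1 - l) * fs j xstar <= 0.
      by apply: mulr_ge0_le0; [rewrite subr_ge0 ltW | exact: fx].
    have P0 : 0 < l * (1 - l) * d ^+ 2 by rewrite !mulr_gt0 ?subr_gt0 // exprn_gt0.
    have h3 : mu * (l * (1 - l) * d ^+ 2) <= mus j * (l * (1 - l) * d ^+ 2).
      by rewrite ler_pM2r.
    have h4 : (1 - l) * (mu * d ^+ 2) > q * (mu * d ^+ 2) by rewrite ltr_pM2r.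
    have h5 : l * ((1 - l) * (mu * d ^+ 2)) > l * eps by rewrite ltr_pM2l // -qe.
    have -> : mus j * l * (1 - l) * d ^+ 2 = mus j * (l * (1 - l) * d ^+ 2) by ring.
    have E : mu * (l * (1 - l) * d ^+ 2) = l * ((1 - l) * (mu * d ^+ 2)) by ring.
    lra.
  have fzle : f z <= f xstar.
    apply: le_trans (cf y xstar l (ltW l0) (ltW l1)) _.
    have : l * f y <= l * f xstar by rewrite ler_pM2l.
    lra.
  have zint : interior (feas fs) z.
    have : \forall w \near z, forall j, fs j w < 0.
      apply: (@filter_forall _ _ (fun j w => fs j w < 0) (nbhs z) _) => j.
      apply: convex_near_neg (fz j).
      exact: sconv_conv (ltW (mupos j)) (sc j).
    by apply: filterS => w hw j; exact: ltW.
  move: (zint) => /nbhs_normP [r /= r0 Hr].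
  apply: (nomin z) zint => w.
  set a := `|w - z|.
  have a0 : 0 <= a by exact: normr_ge0.
  set t := Num.min 1 (r / (2 * (a + 1))).
  have t0 : 0 < t by rewrite lt_min ltr01 /= divr_gt0 // mulr_gt0 // ltr_pwDr.
  have t1 : t <= 1 by rewrite ge_min lexx.
  have ta : t * a < r.
    have : t <= r / (2 * (a + 1)) by rewrite ge_min lexx orbT.
    move=> tle; apply: le_lt_trans (ler_wpM2r a0 tle) _.
    rewrite mulrAC ltr_pdivrMr ?mulr_gt0 // ?ltr_pwDr //; nra.
  have pf : feas fs (t *: w + (1 - t) *: z).
    apply: Hr; rewrite /ball_ /=.
    have -> : t *: w + (1 - t) *: z = z + t *: (w - z).
      by rewrite -(@seg_id _ _ z (w - z) t) (addrC z) subrK.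
    rewrite opprD addrA subrr add0r.
    by rewrite normrN normrZ ger0_norm ?ltW.
  have := xmin _ pf; have := cf w z t (ltW t0) t1.
  move=> h1 h2.
  have : t * f z <= t * f w by lra.
  by rewrite ler_pM2l.
have sq : d <= Num.sqrt (eps / mu).
  rewrite -(ger0_norm (ltW d0)) -sqrtr_sqr ler_sqrt; last by rewrite divr_ge0 // ltW.
  by rewrite ler_pdivlMr // mulrC.
split; first exact: sq.
move=> L lip.
have H := lip y xstar; rewrite -/d in H.
have L0 : 0 <= L.
  by rewrite -(pmulr_lge0 _ d0); apply: le_trans H.
by apply: le_trans H _; apply: ler_wpM2l.
Qed.
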